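(* Let $\Theta\subseteq\mathbb{R}^p$ be convex, and let $f:\mathbb{R}^p\to\mathbb{R}$ be continuous, convex and bounded below, with a minimizer $\theta^\star$ on $\Theta$; set $f^\star\triangleq f(\theta^\star)$. Let $\theta_0\in\Theta$ and consider the sequence generated by: for $n\ge1$, choose $g_n\in\mathcal{S}_{L,\rho}(f,\theta_{n-1})$ with $\rho\ge L$ and set $\theta_n\in\operatorname{arg\,min}_{\theta\in\Theta}g_n(\theta)$. Then for all $n\ge1$, $$f(\theta_n)-f^\star\le\frac{L\|\theta_0-\theta^\star\|_2^2}{2n}.$$ If moreover $f$ is $\mu$-strongly convex, then for all $n\ge1$, $$\|\theta_n-\theta^\star\|_2^2\le\Big(\frac{L}{\rho+\mu}\Big)^n\|\theta_0-\theta^\star\|_2^2,\qquad f(\theta_n)-f^\star\le\Big(\frac{L}{\rho+\mu}\Big)^{n-1}\frac{L\|\theta_0-\theta^\star\|_2^2}{2}.$$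
   Context: First-order surrogates: given convex $\Theta\subseteq\mathbb{R}^p$, $g:\mathbb{R}^p\to\mathbb{R}$ belongs to $\mathcal{S}_L(f,\kappa)$ if (a) $g(\theta')\ge f(\theta')$ for all $\theta'\in\operatorname{arg\,min}_{\theta\in\Theta}g(\theta)$, and (b) $h\triangleq g-f$ is differentiable on $\mathbb{R}^p$ with $L$-Lipschitz gradient, $h(\kappa)=0$ and $\nabla h(\kappa)=0$. $\mathcal{S}_{L,\rho}(f,\kappa)$ is the subset of $\rho$-strongly convex elements of $\mathcal{S}_L(f,\kappa)$. The minimizers $\theta_n$ are assumed to exist. *)

(* Defs.v *)
From HB Require Import structures.
From mathcomp Require Import all_boot all_order all_algebra.
From mathcomp Require Import all_classical all_reals.
From mathcomp Require Import topology normedtype derive.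
Set Implicit Arguments. Unset Strict Implicit. Unset Printing Implicit Defensive.
Import Order.TTheory GRing.Theory Num.Theory.
Import numFieldNormedType.Exports.
Local Open Scope classical_set_scope.
Local Open Scope ring_scope.

Section Defs.
Context {R : realType} {p : nat}.
Notation V := 'rV[R]_p.

Definition sqnorm (v : V) : R := \sum_(i < p) (v ord0 i) ^+ 2.
Definition enorm (v : V) : R := Num.sqrt (sqnorm v).

Definition convex_set (Theta : set V) : Prop :=
  forall x y (t : R), Theta x -> Theta y -> 0 <= t <= 1 ->
    Theta (t *: x + (1 - t) *: y).

Definition convex_fun (f : V -> R) : Prop :=
  forall x y (t : R), 0 <= t <= 1 ->
    f (t *: x + (1 - t) *: y) <= t * f x + (1 - t) * f y.

Definition strongly_convex (rho : R) (g : V -> R) : Prop :=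
  convex_fun (fun x => g x - rho / 2 * sqnorm x).

Definition is_argmin (Theta : set V) (g : V -> R) (x : V) : Prop :=
  Theta x /\ forall y, Theta y -> g x <= g y.

Definition grad (h : V -> R) (x : V) : V :=
  \row_(i < p) ('d h x (delta_mx ord0 i : V)).

Definition surrogate (Theta : set V) (L : R) (f : V -> R) (kappa : V)
    (g : V -> R) : Prop :=
  (forall th', is_argmin Theta g th' -> f th' <= g th') /\
  let h := fun x => g x - f x in
  (forall x, differentiable h x) /\
  (forall x y, enorm (grad h x - grad h y) <= L * enorm (x - y)) /\
  h kappa = 0 /\ grad h kappa = 0.

Definition sc_surrogate (Theta : set V) (L rho : R) (f : V -> R) (kappa : V)
    (g : V -> R) : Prop :=
  surrogate Theta L f kappa g /\ strongly_convex rho g.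

End Defs.

(* Main.v *)
Require Import Defs.
From HB Require Import structures.
From mathcomp Require Import all_boot all_order all_algebra.
From mathcomp Require Import all_classical all_reals.
From mathcomp Require Import topology normedtype derive.
From mathcomp Require Import ring lra.
Import Order.TTheory GRing.Theory Num.Theory.
Import numFieldNormedType.Exports.
Local Open Scope classical_set_scope.
Local Open Scope ring_scope.


Section H0.
Context {R : realType} {p : nat}.
Notation V := 'rV[R]_p.

Lemma sqnorm_ge0 (v : V) : 0 <= sqnorm v.
Proof. by apply: sumr_ge0 => i _; rewrite sqr_ge0. Qed.

Lemma sqnorm_comb (x y : V) t :
  sqnorm (t *: x + (1 - t) *: y) =
  t * sqnorm x + (1 - t) * sqnorm y - t * (1 - t) * sqnorm (x - y).
Proof.
rewrite /sqnorm !mulr_sumr -big_split /= -sumrB.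
by apply: eq_bigr => i _; rewrite !mxE; ring.
Qed.

Lemma dd_sum (h : V -> R) y (v : V) :
  'd h y v = \sum_(i < p) v ord0 i * grad h y ord0 i.
Proof.
rewrite {1}(row_sum_delta v) linear_sum; apply: eq_bigr => i _.
by rewrite linearZ /= /grad mxE.
Qed.

Lemma enorm_sq (v : V) : enorm v ^+ 2 = sqnorm v.
Proof. by rewrite /enorm sqr_sqrtr // sqnorm_ge0. Qed.

End H0.


Section H1.
Context {R : realType} {p : nat}.
Notation V := 'rV[R]_p.

Lemma lim_t (A B : R) : (forall t, 0 < t <= 1 -> B * (1 - t) <= A) -> B <= A.
Proof.
move=> H; have [B0|B0] := lerP B 0.
  have := H 1; rewrite ltr01 lexx subrr mulr0 => /(_ isT) A0.
  by apply: le_trans A0.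
rewrite leNgt; apply/negP => AB.
have Bn : B != 0 by rewrite gt_eqF.
have [A0|A0] := lerP 0 A; last first.
  by have := H 1; rewrite ltr01 lexx subrr mulr0 => /(_ isT) A1; lra.
have := H ((B - A) / (2 * B)).
have -> : B * (1 - (B - A) / (2 * B)) = (A + B) / 2 by field.
have t0 : 0 < (B - A) / (2 * B) by apply: divr_gt0; lra.
have t1 : (B - A) / (2 * B) <= 1.
  rewrite ler_pdivrMr.
  + idtac "A"; lra.
  + idtac "B"; lra.
rewrite t0 t1 => /(_ isT); lra.
Qed.

Lemma sc_argmin (Theta : set V) (g : V -> R) rho x y :
  convex_set Theta -> strongly_convex rho g -> is_argmin Theta g x -> Theta y ->
  g x + rho / 2 * sqnorm (y - x) <= g y.
Proof.
move=> cT sc [Tx mx] Ty.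
suff: rho / 2 * sqnorm (y - x) <= g y - g x by lra.
apply: lim_t => t /andP [t0 t1].
have t01 : 0 <= t <= 1 by rewrite (ltW t0) t1.
have Txt := cT y x t Ty Tx t01.
have := mx _ Txt.
have := sc y x t t01.
rewrite /= sqnorm_comb => h1 h2.
have : 0 <= t * ((g y - g x) - rho / 2 * sqnorm (y - x) * (1 - t)).
  set D := sqnorm (y - x) in h1 *.
  set G := g _ in h1 h2.
  set P := _ - _ in h1; set Q := _ + _ in h1.
  have -> : t * (g y - g x - rho / 2 * D * (1 - t)) = (Q - P) + (G - g x).
    by rewrite /P /Q; ring.
  by apply: addr_ge0; rewrite subr_ge0.
by rewrite pmulr_rge0 // subr_ge0.
Qed.
End H1.


Section H2.
Context {R : realType} {p : nat}.
Notation V := 'rV[R]_p.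

Lemma sqnormZ (t : R) (v : V) : sqnorm (t *: v) = t ^+ 2 * sqnorm v.
Proof. by rewrite /sqnorm mulr_sumr; apply: eq_bigr => i _; rewrite mxE; ring. Qed.

Lemma cs_bound (a b : V) (k : R) : 0 <= k -> sqnorm b <= k ^+ 2 * sqnorm a ->
  \sum_(i < p) a ord0 i * b ord0 i <= k * sqnorm a.
Proof.
move=> k0 hb; have [k0'|kp] := eqVneq k 0.
  subst k; rewrite mul0r.
  rewrite expr0n /= mul0r in hb.
  have sb : sqnorm b = 0 by apply/eqP; rewrite eq_le hb sqnorm_ge0.
  move/eqP: sb; rewrite /sqnorm psumr_eq0 => [/allP hall|i _]; last by rewrite sqr_ge0.
  rewrite big1 // => i _.
  have := hall i (mem_index_enum i); rewrite /= sqrf_eq0 => /eqP ->; by rewrite mulr0.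
have kpos : 0 < k by rewrite lt_def kp k0.
have e : forall i, a ord0 i * b ord0 i <= (k * a ord0 i ^+ 2 + b ord0 i ^+ 2 / k) / 2.
  move=> i; set x := a ord0 i; set y := b ord0 i.
  have : 0 <= (k * x - y) ^+ 2 / (2 * k) by apply: divr_ge0; [rewrite sqr_ge0|lra].
  have -> : (k * x - y) ^+ 2 / (2 * k) = (k * x ^+ 2 + y ^+ 2 / k) / 2 - x * y.
    by field; rewrite kp.
  by rewrite subr_ge0.
apply: le_trans (ler_sum _ (fun i _ => e i)) _.
rewrite -mulr_suml big_split /= -mulr_sumr -mulr_suml.
rewrite -/(sqnorm a) -/(sqnorm b).
have : sqnorm b / k <= k * sqnorm a.
  by rewrite ler_pdivrMr // mulrC mulrA -expr2.
lra.
Qed.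

End H2.


Section H3.
Context {R : realType} {p : nat}.
Notation V := 'rV[R]_p.

Lemma line_derive (h : V -> R) (kappa v : V) t :
  (forall x, differentiable h x) ->
  derivable (fun s : R => h (s *: v + kappa)) t 1 /\
  'D_1 (fun s : R => h (s *: v + kappa)) t = 'd h (t *: v + kappa) v.
Proof.
move=> dh.
set y := t *: v + kappa.
have E : (fun s : R => s^-1 *: (((fun s : R => h (s *: v + kappa)) \o shift t) (s *: 1)
            - h (t *: v + kappa)))
       = (fun s : R => s^-1 *: ((h \o shift y) (s *: v) - h y)).
  apply/funext => s /=; congr (_ *: (h _ - _)).
  by rewrite /y -[s%:A]/(s * 1) mulr1 scalerDl addrA.
split.
  rewrite /derivable E; exact: diff_derivable.
by rewrite -deriveE // /derive E.
Qed.

End H3.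


Section H4.
Context {R : realType} {p : nat}.
Notation V := 'rV[R]_p.

Lemma descent (h : V -> R) (L : R) (kappa x : V) :
  (forall x, differentiable h x) ->
  (forall x y, enorm (grad h x - grad h y) <= L * enorm (x - y)) ->
  h kappa = 0 -> grad h kappa = 0 ->
  h x <= `|L| / 2 * sqnorm (x - kappa).
Proof.
move=> dh lip hk gk.
set v := x - kappa; set S := sqnorm v.
set c := `|L| / 2 * S.
pose phi := fun s : R => h (s *: v + kappa).
pose q := c *: (@GRing.exp R ^~ 2).
pose psi := phi - q.
have dq : forall t, derivable q t 1 /\ 'D_1 q t = c * (2 * t).
  move=> t; split; first by apply: derivableZ; exact: ex_derive.
  rewrite deriveZ /=; last exact: ex_derive.
  by rewrite exp_derive /= expr1 -[(_ *: t)%:A]/((2%:R *: t) * 1) mulr1.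
have dpsi : forall t, derivable psi t 1.
  move=> t; apply: derivableB; [exact: (line_derive _ _ _ _ dh).1 | exact: (dq t).1].
have bound : forall t, 0 <= t -> 'd h (t *: v + kappa) v <= `|L| * t * S.
  move=> t t0; rewrite dd_sum.
  apply: cs_bound; first by rewrite mulr_ge0.
  have := lip (t *: v + kappa) kappa; rewrite gk subr0 addrK => hl.
  have e0 : 0 <= enorm (grad h (t *: v + kappa)) by apply: sqrtr_ge0.
  have : enorm (grad h (t *: v + kappa)) ^+ 2 <= (L * enorm (t *: v)) ^+ 2.
    by rewrite ler_sqr // ?nnegrE // (le_trans e0 hl).
  rewrite enorm_sq exprMn enorm_sq sqnormZ => hh.
  by rewrite exprMn real_normK ?num_real // -mulrA.
have : psi 1 <= psi 0.
  apply: (@ler0_derive1_nincr _ psi 0 1) => //.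
  - move=> t; rewrite in_itv /= => /andP [t0 _].
    rewrite derive1E deriveB; [|exact: (line_derive _ _ _ _ dh).1|exact: (dq t).1].
    rewrite (line_derive _ _ _ _ dh).2 (dq t).2.
    have := bound t (ltW t0); rewrite /c; lra.
  - apply: continuous_subspaceT => t.
    apply: differentiable_continuous; apply/derivable1_diffP; exact: dpsi.
move=> H.
have : h (1 *: v + kappa) - c * 1 ^+ 2 <= h (0 *: v + kappa) - c * 0 ^+ 2 by exact: H.
rewrite scale1r scale0r add0r hk expr1n expr0n /= mulr1 mulr0 /v subrK; lra.
Qed.

End H4.


Lemma sqnorm_sym {R : realType} {p : nat} (a b : 'rV[R]_p) :
  sqnorm (a - b) = sqnorm (b - a).
Proof. by apply: eq_bigr => i _; rewrite !mxE; ring. Qed.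

Theorem proposition2p3 (R : realType) (p : nat) (Theta : set 'rV[R]_p)
  (f : 'rV[R]_p -> R) (thstar : 'rV[R]_p) (L rho : R)
  (g : nat -> 'rV[R]_p -> R) (theta : nat -> 'rV[R]_p) :
  convex_set Theta ->
  continuous f -> convex_fun f -> (exists b : R, forall x, b <= f x) ->
  is_argmin Theta f thstar ->
  Theta (theta 0%N) ->
  L <= rho ->
  (forall n : nat, (1 <= n)%N ->
     sc_surrogate Theta L rho f (theta n.-1) (g n) /\
     is_argmin Theta (g n) (theta n)) ->
  (forall n : nat, (1 <= n)%N ->
     f (theta n) - f thstar
       <= L * sqnorm (theta 0%N - thstar) / (2 * n%:R)) /\
  (forall mu : R, 0 < mu -> strongly_convex mu f ->
     forall n : nat, (1 <= n)%N ->
       sqnorm (theta n - thstar)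
         <= (L / (rho + mu)) ^+ n * sqnorm (theta 0%N - thstar) /\
       f (theta n) - f thstar
         <= (L / (rho + mu)) ^+ n.-1 * (L * sqnorm (theta 0%N - thstar) / 2)).
Proof.
move=> cT _ _ _ [Tstar mstar] T0 LR Hs.
have TH : forall n, Theta (theta n).
  by case=> // n; have [_ [? _]] := Hs n.+1 isT.
have KEY0 : forall n th, (1 <= n)%N -> Theta th ->
    f (theta n) + rho / 2 * sqnorm (theta n - th)
      <= f th + `|L| / 2 * sqnorm (theta n.-1 - th).
  move=> n th n1 Tth.
  have [[[surA [dh [lip [hk gk]]]] sc] am] := Hs n n1.
  have h1 := surA _ am.
  have h2 := sc_argmin _ _ _ _ _ cT sc am Tth.
  have h3 := descent _ _ _ th dh lip hk gk.
  rewrite /= in h3.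
  rewrite (sqnorm_sym (theta n)) (sqnorm_sym (theta n.-1)).
  lra.
have Lcase : 0 <= L \/ (forall v : 'rV[R]_p, sqnorm v = 0).
  have [L0|L0] := lerP 0 L; [by left|right] => v.
  have [[[_ [_ [lip _]]] _] _] := Hs 1%N isT.
  have := lip v 0; rewrite subr0 => hl.
  have e0 : 0 <= enorm (grad (fun x => g 1%N x - f x) v - grad (fun x => g 1%N x - f x) 0)
    by apply: sqrtr_ge0.
  have ev : 0 <= enorm v by apply: sqrtr_ge0.
  have : enorm v = 0 by apply/eqP; rewrite eq_le ev andbT; nra.
  by rewrite -enorm_sq => ->; rewrite expr0n.
have absL : forall v : 'rV[R]_p, `|L| * sqnorm v = L * sqnorm v.
  move=> v; case: Lcase => [L0|z]; first by rewrite ger0_norm.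
  by rewrite z !mulr0.
have Lsq : forall v : 'rV[R]_p, 0 <= L * sqnorm v.
  move=> v; case: Lcase => [L0|z]; first by rewrite mulr_ge0 // sqnorm_ge0.
  by rewrite z mulr0.
have rsq : forall v : 'rV[R]_p, L * sqnorm v <= rho * sqnorm v.
  by move=> v; rewrite ler_wpM2r // sqnorm_ge0.
have KEY : forall n th, (1 <= n)%N -> Theta th ->
    f (theta n) + rho / 2 * sqnorm (theta n - th)
      <= f th + L / 2 * sqnorm (theta n.-1 - th).
  move=> n th n1 Tth; have := KEY0 n th n1 Tth.
  by rewrite [`|L| / 2 * _]mulrAC absL [L * _ / 2]mulrAC.
pose d k := sqnorm (theta k - thstar).
pose e k := f (theta k) - f thstar.
have step : forall n, (1 <= n)%N -> e n <= L / 2 * (d n.-1 - d n).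
  move=> n n1; have := KEY n thstar n1 Tstar.
  have := rsq (theta n - thstar); rewrite /e /d; lra.
have mono : forall n, e n.+1 <= e n.
  move=> n; have := KEY n.+1 (theta n) isT (TH n).
  rewrite /= subrr.
  have -> : sqnorm (0 : 'rV[R]_p) = 0 by rewrite /sqnorm big1 // => i _; rewrite mxE expr0n.
  have := rsq (theta n.+1 - theta n); have := Lsq (theta n.+1 - theta n).
  rewrite /e; lra.
split.
  have ind : forall n, (n.+1)%:R * e n.+1 <= L / 2 * (d 0%N - d n.+1).
    elim=> [|n IH]; first by rewrite mul1r; exact: step.
    rewrite -addn1 natrD mulrDl mul1r.
    have := step n.+2 isT; rewrite /=.
    have : (n.+1)%:R * e n.+2 <= (n.+1)%:R * e n.+1 by rewrite ler_wpM2l.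
    rewrite addn1; lra.
  case=> // n _.
  rewrite ler_pdivlMr; last by rewrite mulr_gt0 // ltr0n.
  have := ind n; have := Lsq (theta n.+1 - thstar); rewrite /e /d.
  lra.
move=> mu mu0 scf.
have SC : forall n, (1 <= n)%N -> (rho + mu) * d n <= L * d n.-1.
  move=> n n1; have := KEY n thstar n1 Tstar.
  have := sc_argmin _ _ _ _ _ cT scf (conj Tstar mstar) (TH n).
  rewrite /d; lra.
case: Lcase => [L0|z]; last first.
  move=> n n1; rewrite !z !mulr0; rewrite ?mul0r ?mulr0; split => //.
  have := step n n1; rewrite /e /d !z subrr !mulr0 ?mul0r ?mulr0; lra.
have rm : 0 < rho + mu by lra.
set c := L / (rho + mu).
have c0 : 0 <= c by rewrite divr_ge0 // ltW.
have dind : forall n, d n <= c ^+ n * d 0%N.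
  elim=> [|n IH]; first by rewrite expr0 mul1r.
  have h : d n.+1 <= c * d n.
    by rewrite /c mulrAC ler_pdivlMr // mulrC; exact: (SC n.+1 isT).
  apply: le_trans h _; rewrite exprS -mulrA ler_wpM2l //.
move=> n n1; split; first exact: dind.
have := step n n1; have := dind n.-1; have := Lsq (theta n - thstar).
rewrite /e /d => h1 h2 h3.
have := ler_wpM2l (x := L / 2) (ltac:(lra)) h2.
lra.
Qed.
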